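(* Let $\alpha\in(0,1/2)$. For every non-degenerate real random variable $X$ with $E|X|<\infty$, $$-1+2\alpha < \tilde{s}_2(\alpha) < 1-2\alpha .$$ Moreover, both bounds are sharp: $\sup_X \tilde{s}_2(\alpha)=1-2\alpha$ and $\inf_X \tilde{s}_2(\alpha)=-1+2\alpha$, where the supremum and infimum range over all non-degenerate random variables $X$ with finite mean.
   Context: For a random variable $X$ with $E|X|<\infty$ and $\tau\in(0,1)$, the $\tau$-expectile $e_X(\tau)$ is the unique real number $t$ satisfying $\tau\, E(X-t)_+ = (1-\tau)\, E(X-t)_-$, where $x_+=\max\{x,0\}$ and $x_-=\max\{-x,0\}$. In particular $e_X(1/2)=\mu:=EX$. For $\alpha\in(0,1/2)$, the expectile skewness is $$\tilde{s}_2(\alpha) = \frac{e_X(1-\alpha)+e_X(\alpha)-2\mu}{e_X(1-\alpha)-e_X(\alpha)}.$$ (For non-degenerate $X$, $e_X(\alpha)<\mu<e_X(1-\alpha)$, so this is well defined.) *)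

(* Defs.v *)
From HB Require Import structures.
From mathcomp Require Import all_boot all_order all_algebra.
From mathcomp Require Import all_classical all_reals all_analysis.
Set Implicit Arguments. Unset Strict Implicit. Unset Printing Implicit Defensive.
Import Order.TTheory GRing.Theory Num.Theory.
Local Open Scope classical_set_scope.
Local Open Scope ring_scope.

Definition mean {d} {T : measurableType d} {R : realType}
  (P : probability T R) (X : T -> R) : R :=
  fine (\int[P]_x (X x)%:E)%E.

Definition expectile_eq {d} {T : measurableType d} {R : realType}
  (P : probability T R) (X : T -> R) (tau t : R) : Prop :=
  ((tau%:E * \int[P]_x (Num.max (X x - t) 0)%:E) =
   ((1 - tau)%:E * \int[P]_x (Num.max (- (X x - t)) 0)%:E))%E.

Definition expectile {d} {T : measurableType d} {R : realType}
  (P : probability T R) (X : T -> R) (tau : R) : R :=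
  xget 0 [set t : R | expectile_eq P X tau t].

Definition expectile_skew {d} {T : measurableType d} {R : realType}
  (P : probability T R) (X : T -> R) (alpha : R) : R :=
  (expectile P X (1 - alpha) + expectile P X alpha - 2 * mean P X) /
  (expectile P X (1 - alpha) - expectile P X alpha).

Definition rv_nondegenerate {d} {T : measurableType d} {R : realType}
  (P : probability T R) (X : T -> R) : Prop :=
  ~ (exists c : R, P [set x | X x = c] = 1%E).

(* Main.v *)
Require Import Defs.
From HB Require Import structures.
From mathcomp Require Import all_boot all_order all_algebra.
From mathcomp Require Import all_classical all_reals all_analysis.
From mathcomp Require Import measurable_realfun.
From mathcomp Require Import ring lra.
Import Order.TTheory GRing.Theory Num.Theory.
Import numFieldNormedType.Exports.
Local Open Scope classical_set_scope.
Local Open Scope ring_scope.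
Set Implicit Arguments.
Unset Strict Implicit.

Lemma mx_pos {R : realType} (a : R) : 0 <= a -> Num.max a 0 = a.
Proof. by move=> h; apply/max_idPl. Qed.
Lemma mx_neg {R : realType} (a : R) : a <= 0 -> Num.max a 0 = 0.
Proof. by move=> h; apply/max_idPr. Qed.
Lemma mx_cases {R : realType} (a : R) : 0 <= a \/ a <= 0.
Proof. by case: (lerP 0 a) => h; [left|right; apply: ltW]. Qed.
Lemma mx_diff {R : realType} (a : R) : Num.max a 0 - Num.max (- a) 0 = a.
Proof.
case: (mx_cases a) => h.
  by rewrite mx_pos // mx_neg ?subr0 //; lra.
by rewrite mx_neg // mx_pos ?sub0r ?opprK //; lra.
Qed.
Lemma mx_sum {R : realType} (a : R) : Num.max a 0 + Num.max (- a) 0 = `|a|.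
Proof.
case: (mx_cases a) => h.
  by rewrite mx_pos // mx_neg ?addr0 ?ger0_norm //; lra.
by rewrite mx_neg // mx_pos ?add0r ?ler0_norm //; lra.
Qed.

Lemma lip_cont {R : realType} (f : R -> R) (k : R) : 0 < k ->
  (forall s t, `|f s - f t| <= k * `|s - t|) -> continuous f.
Proof.
move=> k0 hf x; apply/cvgrPdist_lt => e e0.
rewrite !near_simpl /=; apply/nbhs_ballP; exists (e / k) => /=.
  by apply: divr_gt0.
move=> y; rewrite /ball /= => hy.
apply: (le_lt_trans (hf x y)).
by rewrite -ltr_pdivlMl // mulrC.
Qed.
Lemma lip_contw {R : realType} (f : R -> R) (k : R) (a b : R) : 0 < k ->
  (forall s t, `|f s - f t| <= k * `|s - t|) -> {within `[a, b], continuous f}.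
Proof. by move=> k0 hf; apply: continuous_subspaceT; exact: lip_cont hf. Qed.

Lemma pos_of_eq {R : realFieldType} (c c' x y : R) : 0 < c -> 0 < c' -> c * x = c' * y ->
  0 <= x -> 0 <= y -> 0 < x + y -> 0 < x /\ 0 < y.
Proof.
move=> c0 c'0 e x0 y0 s.
have [x00|xp] := eqVneq x 0.
  move: e; rewrite x00 mulr0 => /esym/eqP; rewrite mulf_eq0 => /orP[/eqP|/eqP]; lra.
have [y00|yp] := eqVneq y 0.
  move: e; rewrite y00 mulr0 => /eqP; rewrite mulf_eq0 => /orP[/eqP|/eqP]; lra.
by split; rewrite lt_def ?xp ?yp.
Qed.

Lemma arith {R : realFieldType} (a A1 B1 A0 B0 e1 e0 m : R) :
  0 < a -> a < 1 / 2 ->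
  (1 - a) * A1 = (1 - (1 - a)) * B1 -> a * A0 = (1 - a) * B0 ->
  A1 - B1 = m - e1 -> A0 - B0 = m - e0 ->
  0 < A1 -> 0 < B0 ->
  (e0 < e1 -> A1 < A0) -> (e0 < e1 -> B0 < B1) ->
  -1 + 2 * a < (e1 + e0 - 2 * m) / (e1 - e0) < 1 - 2 * a.
Proof.
move=> a0 a1 E1 E0 I1 I0 Ap Bp S1 S0.
have E1' : a * B1 = (1 - a) * A1 by rewrite E1; congr (_ * _); lra.
have k1 : a * (e1 - m) = (1 - 2 * a) * A1.
  rewrite (_ : e1 - m = B1 - A1); last lra.
  by rewrite mulrBr E1'; ring.
have k2 : a * (m - e0) = (1 - 2 * a) * B0.
  rewrite (_ : m - e0 = A0 - B0); last lra.
  by rewrite mulrBr E0; ring.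
have c0 : 0 < 1 - 2 * a by lra.
have u0 : 0 < e1 - m.
  have : 0 < a * (e1 - m) by rewrite k1; apply: mulr_gt0.
  by rewrite pmulr_rgt0.
have v0 : 0 < m - e0.
  have : 0 < a * (m - e0) by rewrite k2; apply: mulr_gt0.
  by rewrite pmulr_rgt0.
have lt01 : e0 < e1 by lra.
have k3 : a * A1 < (1 - a) * B0.
  by rewrite -E0 ltr_pM2l //; apply: S1.
have k4 : a * B0 < (1 - a) * A1.
  by rewrite -E1' ltr_pM2l //; apply: S0.
have q1 : a * (e1 - m) < (1 - a) * (m - e0).
  rewrite -(ltr_pM2l a0) mulrCA k1 [X in _ < X]mulrCA k2 [X in X < _]mulrCA [X in _ < X]mulrCA.
  by rewrite ltr_pM2l.
have q2 : a * (m - e0) < (1 - a) * (e1 - m).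
  rewrite -(ltr_pM2l a0) mulrCA k2 [X in _ < X]mulrCA k1 [X in X < _]mulrCA [X in _ < X]mulrCA.
  by rewrite ltr_pM2l.
have D0 : 0 < e1 - e0 by lra.
rewrite ltr_pdivlMr // ltr_pdivrMr //.
apply/andP; split; lra.
Qed.

Section Zero.
Context d (T : measurableType d) (R : realType) (P : probability T R).

Lemma zero_ae (h : T -> R) : P.-integrable setT (EFin \o h) ->
  (forall x, 0 <= h x) -> \int[P]_x h x = 0 ->
  exists N, [/\ measurable N, P N = 0%E & forall x, ~ N x -> h x = 0].
Proof.
move=> ih h0 hint.
have mh : measurable_fun setT h by have /integrableP[/measurable_EFinP] := ih.
have fin : (\int[P]_x (h x)%:E)%E \is a fin_num by exact: integrable_fin_num.
have i0 : (\int[P]_x (h x)%:E)%E = 0%E.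
  by rewrite -(fineK fin); move: hint; rewrite /Rintegral => ->.
have : (\int[P]_x `|(h x)%:E|)%E = 0%E.
  by rewrite -i0; apply: eq_integral => x _; rewrite gee0_abs // lee_fin.
move/(ae_eq_integral_abs P measurableT (proj2 (measurable_EFinP _ _) mh)).
move=> [N [mN N0 sub]]; exists N; split => // x Nx.
apply: contrapT => hx; apply: Nx; apply: sub => /= /(_ I) [].
exact: hx.
Qed.

Lemma zero_int (g : T -> R) (N : set T) : measurable N -> P N = 0%E ->
  measurable_fun setT g -> (forall x, 0 <= g x) ->
  (forall x, ~ N x -> g x = 0) -> \int[P]_x g x = 0.
Proof.
move=> mN N0 mg g0 gN.
rewrite /Rintegral (@ge0_negligible_integral _ _ _ P setT N) //; last 2 first.
- exact/measurable_EFinP.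
- by move=> x _; rewrite lee_fin.
rewrite (_ : (\int[P]_(x in _) (g x)%:E)%E = (\int[P]_(x in setT `\` N) 0)%E).
  by rewrite integral0.
apply: eq_integral => x; rewrite inE => -[_ Nx]; by rewrite gN.
Qed.

End Zero.

Section Gen.
Context d (T : measurableType d) (R : realType) (P : probability T R) (Y : T -> R).
Hypothesis iY : P.-integrable setT (EFin \o Y).

Lemma mY : measurable_fun setT Y.
Proof. by have /integrableP[/measurable_EFinP] := iY. Qed.

Lemma icst (c : R) : P.-integrable setT (EFin \o (fun _ : T => c)).
Proof. exact: finite_measure_integrable_cst. Qed.

Lemma iYt t : P.-integrable setT (EFin \o (fun x => Y x - t)).
Proof.
apply: (eq_integrable measurableT _ _ _ (integrableB measurableT iY (icst t))).
by move=> x _ /=; rewrite EFinB.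
Qed.

Lemma le_int (f g : T -> R) : measurable_fun setT f ->
  (forall x, `|f x| <= `|g x|) -> P.-integrable setT (EFin \o g) ->
  P.-integrable setT (EFin \o f).
Proof.
move=> mf fg ig; apply: (le_integrable measurableT _ _ ig).
  exact/measurable_EFinP.
by move=> x _ /=; rewrite lee_fin fg.
Qed.

Lemma ipos t : P.-integrable setT (EFin \o (fun x => Num.max (Y x - t) 0)).
Proof.
apply: (le_int _ _ (iYt t)).
  by apply: (measurable_maxr (g := fun _ => 0)) => //; apply: measurable_funB => //; exact: mY.
move=> x; rewrite ger0_norm ?le_max ?lexx ?orbT //.
by rewrite ge_max normr_ge0 ler_norm.
Qed.

Definition Fp t := \int[P]_x (Num.max (Y x - t) 0).

Lemma Fp_ge0 t : 0 <= Fp t.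
Proof. by apply: Rintegral_ge0 => x _; rewrite le_max lexx orbT. Qed.

Lemma Fp_E t : (\int[P]_x (Num.max (Y x - t) 0)%:E)%E = (Fp t)%:E.
Proof. by rewrite fineK //; apply: integrable_fin_num => //; exact: ipos. Qed.

Lemma Rint_cst (c : R) : \int[P]_x c = c.
Proof. rewrite Rintegral_cst //; move: (probability_setT P) => /(congr1 fine) /= ->; exact: mulr1. Qed.

Lemma Fp_mono s t : s <= t -> Fp t <= Fp s.
Proof.
move=> st; apply: le_Rintegral => //; [exact: ipos|exact: ipos|move=> x _].
by rewrite ge_max !le_max lexx orbT andbT; apply/orP; left; lra.
Qed.

Lemma Fp_lip s t : s <= t -> Fp s <= Fp t + (t - s).
Proof.
move=> st; rewrite -[X in _ + X]Rint_cst -RintegralD //; last first.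
- exact: icst.
- exact: ipos.
apply: le_Rintegral => //; first exact: ipos.
  by apply: (eq_integrable measurableT _ _ _ (integrableD measurableT (ipos t) (icst (t - s)))).
move=> x _; rewrite ge_max; apply/andP; split.
  by apply: (@le_trans _ _ (Y x - t + (t - s))); [lra | rewrite lerD2r le_max lexx].
by apply: addr_ge0; [rewrite le_max lexx orbT | lra].
Qed.


Lemma ineg t : P.-integrable setT (EFin \o (fun x => Num.max (- (Y x - t)) 0)).
Proof.
apply: (le_int _ _ (iYt t)).
  apply: (measurable_maxr (g := fun _ => 0)) => //.
  by apply: measurableT_comp => //; apply: measurable_funB => //; exact: mY.
move=> x; rewrite ger0_norm ?le_max ?lexx ?orbT //.
by rewrite ge_max normr_ge0 -normrN ler_norm.
Qed.

Definition Fm t := \int[P]_x (Num.max (- (Y x - t)) 0).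
Definition mu := \int[P]_x Y x.

Lemma Fm_ge0 t : 0 <= Fm t.
Proof. by apply: Rintegral_ge0 => x _; rewrite le_max lexx orbT. Qed.

Lemma Fm_E t : (\int[P]_x (Num.max (- (Y x - t)) 0)%:E)%E = (Fm t)%:E.
Proof. by rewrite fineK //; apply: integrable_fin_num => //; exact: ineg. Qed.

Lemma FpFm t : Fp t - Fm t = mu - t.
Proof.
rewrite /Fp /Fm -RintegralB //; [|exact: ipos|exact: ineg].
rewrite -[X in _ - X]Rint_cst -RintegralB //; [|exact: icst].
apply: eq_Rintegral => x _.
exact: mx_diff.
Qed.


Lemma Fm_mono s t : s <= t -> Fm s <= Fm t.
Proof. by move=> st; have := Fp_lip st; have := FpFm s; have := FpFm t; lra. Qed.

Lemma iabs t : P.-integrable setT (EFin \o (fun x => `|Y x - t|)).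
Proof.
apply: (le_int _ _ (iYt t)); last by move=> x; rewrite normr_id.
by apply: measurableT_comp => //; apply: measurable_funB => //; exact: mY.
Qed.

Lemma Fsum_pos : ~ (exists c, P [set x | Y x = c] = 1%E) -> forall t, 0 < Fp t + Fm t.
Proof.
move=> nd t; rewrite lt_def addr_ge0 ?Fp_ge0 ?Fm_ge0 // andbT.
apply/negP => /eqP h0; apply: nd; exists t.
have : \int[P]_x `|Y x - t| = 0.
  rewrite -h0 /Fp /Fm -RintegralD //; [|exact: ipos|exact: ineg].
  by apply: eq_Rintegral => x _; rewrite mx_sum.
case/zero_ae; [exact: iabs| by move=> x; exact: normr_ge0|].
move=> N [mN N0 HN].
have mS : measurable [set x | Y x = t].
  by have := mY measurableT (measurable_set1 t); rewrite setTI.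
apply/eqP; rewrite eq_le probability_le1 //=.
have <- : P (~` N) = 1%E by rewrite probability_setC // N0 sube0.
apply: le_measure; rewrite ?inE //; first exact: measurableC.
move=> x /HN /eqP; rewrite normr_eq0 subr_eq0 => /eqP //.
Qed.

Lemma Fp_strict s t : s < t -> 0 < Fp t -> Fp t < Fp s.
Proof.
move=> st pt; rewrite ltNge; apply/negP => hle.
have e : Fp s - Fp t = 0 by have := Fp_mono (ltW st); lra.
have mps u : measurable_fun setT (fun x => Num.max (Y x - u) 0).
  by apply: (measurable_maxr (g := fun _ => 0)) => //; apply: measurable_funB => //; exact: mY.
move: e; rewrite /Fp -RintegralB //; [|exact: ipos|exact: ipos].
case/zero_ae.
- apply: (le_int (g := fun _ => t - s)); last exact: icst.
    exact: measurable_funB.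
  move=> x; rewrite (ger0_norm (_ : 0 <= t - s)); last lra.
  case: (mx_cases (Y x - s)) => h1; case: (mx_cases (Y x - t)) => h2.
  + by rewrite mx_pos // mx_pos // ler_norml; apply/andP; split; lra.
  + by rewrite mx_pos // mx_neg // ler_norml; apply/andP; split; lra.
  + lra.
  + by rewrite mx_neg // mx_neg // subr0 normr0; lra.
- move=> x; case: (mx_cases (Y x - s)) => h1; case: (mx_cases (Y x - t)) => h2.
  + by rewrite mx_pos // mx_pos //; lra.
  + by rewrite mx_pos // mx_neg //; lra.
  + lra.
  + by rewrite mx_neg // mx_neg // subr0.
move=> N [mN N0 HN].
suff : Fp t = 0 by lra.
apply: (zero_int mN N0 (mps t)); first by move=> x; rewrite le_max lexx orbT.
move=> x /HN; case: (mx_cases (Y x - s)) => h1; case: (mx_cases (Y x - t)) => h2.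
+ by rewrite mx_pos // mx_pos //; lra.
+ by rewrite (mx_neg h2).
+ lra.
+ by rewrite (mx_neg h2).
Qed.

Definition H tau t := tau * Fp t - (1 - tau) * Fm t.

Lemma Fp_abs s t : `|Fp s - Fp t| <= `|s - t|.
Proof.
case: (lerP s t) => st.
  have h1 := Fp_mono st; have h2 := Fp_lip st.
  rewrite (ger0_norm (_ : 0 <= Fp s - Fp t)); last lra.
  lra.
have h1 := Fp_mono (ltW st); have h2 := Fp_lip (ltW st).
rewrite (ler0_norm (_ : Fp s - Fp t <= 0)); last lra.
lra.
Qed.

Lemma H_lip tau : 0 < tau < 1 -> forall s t, `|H tau s - H tau t| <= 2 * `|s - t|.
Proof.
move=> /andP[t0 t1] s t.
have ef : forall u, Fm u = Fp u - mu + u by move=> u; have := FpFm u; lra.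
rewrite /H !ef.
have := Fp_abs s t; rewrite ler_norml => /andP[h1 h2].
have a0 : 0 <= `|s - t| by [].
have [st|st] := lerP s t.
  have e : `|s - t| = t - s by rewrite ler0_norm; lra.
  rewrite e in h1 h2.
  rewrite ler_norml; apply/andP; split; nra.
have e : `|s - t| = s - t by rewrite gtr0_norm; lra.
rewrite e in h1 h2.
rewrite ler_norml; apply/andP; split; nra.
Qed.

Lemma H_ex tau : 0 < tau < 1 -> exists t, tau * Fp t = (1 - tau) * Fm t.
Proof.
move=> /andP[t0 t1].
have ef : forall u, Fm u = Fp u - mu + u by move=> u; have := FpFm u; lra.
set K := (Fm mu + Fp mu) / (tau * (1 - tau)).
have tt0 : 0 < tau * (1 - tau) by apply: mulr_gt0; lra.
have eK : K * (tau * (1 - tau)) = Fm mu + Fp mu by rewrite /K mulfVK //; lra.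
have K0 : 0 <= K by rewrite /K divr_ge0 ?addr_ge0 ?Fm_ge0 ?Fp_ge0 //; lra.
have hK1 : Fm mu <= tau * K by have := Fm_ge0 mu; have := Fp_ge0 mu; nra.
have hK2 : Fp mu <= (1 - tau) * K by have := Fm_ge0 mu; have := Fp_ge0 mu; nra.
have ha : 0 <= H tau (mu - K).
  have := Fm_mono (_ : mu - K <= mu); have := Fm_ge0 (mu - K); have := FpFm (mu - K).
  rewrite /H; nra.
have hb : H tau (mu + K) <= 0.
  have := Fp_mono (_ : mu <= mu + K); have := Fp_ge0 (mu + K); have := FpFm (mu + K).
  rewrite /H; nra.
have [c _ hc] : exists2 c, c \in `[mu - K, mu + K] & H tau c = 0.
  apply: IVT.
- lra.
- apply: (@lip_contw _ _ 2) => //; apply: H_lip; exact/andP.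
- by rewrite ge_min le_max hb ha orbT.
by exists c; move: hc; rewrite /H; lra.
Qed.

Lemma H_uniq tau s t : 0 < tau < 1 -> tau * Fp s = (1 - tau) * Fm s ->
  tau * Fp t = (1 - tau) * Fm t -> s = t.
Proof.
move=> /andP[t0 t1].
wlog st : s t / s <= t.
  move=> W hs ht; case: (lerP s t) => h; first exact: W.
  by apply/esym/W => //; apply: ltW.
move=> hs ht; apply/eqP; rewrite eq_le st /=; apply/negP => ts.
have {}ts : s < t by rewrite lt_def st andbT eq_sym; apply/negP => /eqP e; apply: ts; rewrite e.
have h1 := Fp_mono st; have h2 := Fm_mono st; have h3 := FpFm s; have h4 := FpFm t.
have e1 : tau * (Fp s - Fp t) = 0 by nra.
have e2 : (1 - tau) * (Fm t - Fm s) = 0 by nra.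
move/eqP: e1; rewrite mulf_eq0 => /orP[/eqP|/eqP] e1; first lra.
move/eqP: e2; rewrite mulf_eq0 => /orP[/eqP|/eqP] e2; first lra.
lra.
Qed.

End Gen.

Section Main.
Context d (T : measurableType d) (R : realType) (P : probability T R) (Y : T -> R).
Hypothesis iY : P.-integrable setT (EFin \o Y).

Local Notation FP := (Fp P Y).
Local Notation FM := (Fm P Y).
Local Notation MU := (mu P Y).

Lemma iNY : P.-integrable setT (EFin \o (fun x => - Y x)).
Proof.
apply: (eq_integrable measurableT _ _ _ (integrableN iY)).
by move=> x _ /=; rewrite EFinN.
Qed.

Lemma Fm_Fp t : FM t = Fp P (fun x => - Y x) (- t).
Proof. by apply: eq_Rintegral => x _; congr (Num.max _ 0); rewrite opprB addrC opprK. Qed.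

Lemma Fm_strict s t : s < t -> 0 < FM s -> FM s < FM t.
Proof.
move=> st; rewrite !Fm_Fp => h.
by apply: (Fp_strict iNY) => //; rewrite ltrN2.
Qed.

Lemma eqE tau t : expectile_eq P Y tau t <-> tau * FP t = (1 - tau) * FM t.
Proof.
rewrite /expectile_eq (Fp_E iY) (Fm_E iY) -!EFinM.
by split => [[]|->].
Qed.

Lemma expectile_spec tau : 0 < tau < 1 ->
  tau * FP (expectile P Y tau) = (1 - tau) * FM (expectile P Y tau).
Proof.
move=> ht; apply/eqE; rewrite /expectile; apply: xgetPex.
have [t ht'] := H_ex iY ht; exists t; exact/eqE.
Qed.

Lemma expectile_val tau t : 0 < tau < 1 -> tau * FP t = (1 - tau) * FM t ->
  expectile P Y tau = t.
Proof. by move=> ht h; apply: (H_uniq iY ht (expectile_spec ht) h). Qed.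

Lemma mean_mu : mean P Y = MU.
Proof. by []. Qed.

End Main.

Section Main2.
Context d (T : measurableType d) (R : realType) (P : probability T R) (Y : T -> R).
Hypothesis iY : P.-integrable setT (EFin \o Y).
Lemma part1 (a : R) : 0 < a -> a < 1 / 2 -> rv_nondegenerate P Y ->
  -1 + 2 * a < expectile_skew P Y a < 1 - 2 * a.
Proof.
move=> a0 a1 nd.
have h1 : 0 < 1 - a < 1 by apply/andP; split; lra.
have h0 : 0 < a < 1 by apply/andP; split; lra.
rewrite /expectile_skew (mean_mu P Y).
have A1 := expectile_spec iY h1.
have A0 := expectile_spec iY h0.
move: A1 A0.
generalize (expectile P Y (1 - a)) (expectile P Y a) => e1 e0 A1 A0.
have [Ap _] : 0 < Fp P Y e1 /\ 0 < Fm P Y e1.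
  apply: (pos_of_eq _ _ A1); [lra|lra|exact: Fp_ge0|exact: Fm_ge0|exact: Fsum_pos].
have [_ Bp] : 0 < Fp P Y e0 /\ 0 < Fm P Y e0.
  apply: (pos_of_eq _ _ A0); [lra|lra|exact: Fp_ge0|exact: Fm_ge0|exact: Fsum_pos].
apply: (arith a0 a1 A1 A0 (FpFm iY e1) (FpFm iY e0) Ap Bp).
- by move=> lt; exact: Fp_strict.
- by move=> lt; exact: Fm_strict.
Qed.
End Main2.

Definition Xb {R : realType} (b : bool) : R := if b then 1 else 0.
Lemma mXb {R : realType} : measurable_fun setT (@Xb R).
Proof. by []. Qed.
HB.instance Definition _ (R : realType) := isMeasurableFun.Build _ _ bool R (@Xb R) mXb.

Section Bern.
Context (R : realType) (p : R) (p0 : 0 < p) (p1 : p < 1).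
Let P := bernoulli_prob p.
Let p01 : 0 <= p <= 1. Proof. by rewrite !ltW. Qed.

Lemma intB (f : bool -> R) : (forall x, 0 <= f x) ->
  (\int[P]_x (f x)%:E)%E = (p * f true + (1 - p) * f false)%:E.
Proof.
move=> f0; rewrite integral_bernoulli_prob //; try by move=> x; rewrite lee_fin.
Qed.

Lemma RintB (f : bool -> R) : (forall x, 0 <= f x) ->
  \int[P]_x f x = p * f true + (1 - p) * f false.
Proof. by move=> f0; rewrite /Rintegral intB. Qed.

Lemma iXb : P.-integrable setT (EFin \o (@Xb R)).
Proof.
apply: (le_int (g := fun _ => 1)); [exact: mXb| |exact: icst].
by case; rewrite /Xb ?normr1 ?normr0.
Qed.

Lemma FpB t : 0 <= t <= 1 -> Fp P Xb t = p * (1 - t).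
Proof.
have pp0 := p0; have pp1 := p1.
move=> /andP[t0 t1]; rewrite /Fp RintB; last by move=> x; rewrite le_max lexx orbT.
rewrite /Xb mx_pos; last lra.
rewrite mx_neg; last lra.
by rewrite mulr0 addr0.
Qed.

Lemma FmB t : 0 <= t <= 1 -> Fm P Xb t = (1 - p) * t.
Proof.
have pp0 := p0; have pp1 := p1.
move=> /andP[t0 t1]; rewrite /Fm RintB; last by move=> x; rewrite le_max lexx orbT.
rewrite /Xb mx_neg; last lra.
rewrite mx_pos; last lra.
by rewrite mulr0 add0r sub0r opprK.
Qed.

Lemma meanB : mean P Xb = p.
Proof.
have pp0 := p0; have pp1 := p1.
rewrite (mean_mu P Xb) /mu RintB; last by case; rewrite /Xb //= ler01.
by rewrite /Xb mulr1 mulr0 addr0.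
Qed.

Lemma expB tau : 0 < tau < 1 ->
  expectile P Xb tau = tau * p / (tau * p + (1 - tau) * (1 - p)).
Proof.
have pp0 := p0; have pp1 := p1.
move=> /andP[ta0 ta1].
have D0 : 0 < tau * p + (1 - tau) * (1 - p).
  by apply: ltr_pwDl; [apply: mulr_gt0|apply: mulr_ge0]; lra.
set t := _ / _.
have t0 : 0 <= t by rewrite /t divr_ge0 //; [apply: mulr_ge0; lra| lra].
have t1 : t <= 1.
  rewrite /t ler_pdivrMr // mul1r lerDl; apply: mulr_ge0; lra.
apply: (expectile_val iXb); first by apply/andP.
rewrite FpB ?t0 ?t1 // FmB ?t0 ?t1 // /t.
field; lra.
Qed.

Lemma ndB : rv_nondegenerate P (@Xb R).
Proof.
have pp0 := p0; have pp1 := p1.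
move=> [c] h.
have : bernoulli_prob p [set x | @Xb R x = c] = 1%E := h.
rewrite (bernoulli_probE p01) !diracE.
rewrite -!EFinM -EFinD => -[]; rewrite /unstable.onem.
case: (boolP (true \in _)) => ht; case: (boolP (false \in _)) => hf.
- move/set_mem: ht; move/set_mem: hf; rewrite /Xb => <- /eqP; rewrite oner_eq0.
  by [].
- by rewrite /=; lra.
- by rewrite /=; lra.
- by rewrite /=; lra.
Qed.

Lemma skewB (a : R) : 0 < a -> a < 1 / 2 ->
  expectile_skew P Xb a = (1 - 2 * a) * (1 - 2 * p).
Proof.
have pp0 := p0; have pp1 := p1.
move=> a0 a1.
rewrite /expectile_skew meanB !expB; try (apply/andP; split; lra).
have D1 : 0 < (1 - a) * p + (1 - (1 - a)) * (1 - p).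
  by apply: ltr_pwDl; [apply: mulr_gt0|apply: mulr_ge0]; lra.
have D0 : 0 < a * p + (1 - a) * (1 - p).
  by apply: ltr_pwDl; [apply: mulr_gt0|apply: mulr_ge0]; lra.
have h3 : (1 - a) * p * (a * p + (1 - a) * (1 - p)) +
      - (a * p) * ((1 - a) * p + (1 - (1 - a)) * (1 - p)) = p * (1 - p) * (1 - 2 * a).
  by ring.
field; apply/and3P; split; [exact: lt0r_neq0 D0 | exact: lt0r_neq0 D1 |].
by rewrite h3; apply: lt0r_neq0; apply: mulr_gt0; [apply: mulr_gt0|]; lra.
Qed.
End Bern.

Unset Implicit Arguments.
Set Strict Implicit.

Theorem mainTheorem2 (R : realType) (alpha : R) (ha0 : 0 < alpha) (ha1 : alpha < 1 / 2) :
  (forall (d : measure_display) (T : measurableType d) (P : probability T R)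
          (X : {RV P >-> R}),
      integrable P setT (EFin \o X) -> rv_nondegenerate P X ->
      -1 + 2 * alpha < expectile_skew P X alpha < 1 - 2 * alpha)
  /\ (forall eps : R, 0 < eps ->
      exists (d : measure_display) (T : measurableType d) (P : probability T R)
             (X : {RV P >-> R}),
        [/\ integrable P setT (EFin \o X), rv_nondegenerate P X &
            1 - 2 * alpha - eps < expectile_skew P X alpha])
  /\ (forall eps : R, 0 < eps ->
      exists (d : measure_display) (T : measurableType d) (P : probability T R)
             (X : {RV P >-> R}),
        [/\ integrable P setT (EFin \o X), rv_nondegenerate P X &
            expectile_skew P X alpha < -1 + 2 * alpha + eps]).
Proof.
split.
  by move=> d T P X iX nd; exact: (part1 iX ha0 ha1 nd).
have e1 : forall eps : R, 0 < eps -> 0 < 1 + eps by move=> eps ep; lra.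
split=> eps ep.
  pose p := eps / (2 * (1 + eps)).
  have hp : p * (2 * (1 + eps)) = eps by rewrite /p mulfVK //; have := e1 _ ep; lra.
  have p0 : 0 < p by rewrite /p divr_gt0 //; have := e1 _ ep; lra.
  have p1 : p < 1 by nra.
  exists _, _, (bernoulli_prob p), (@Xb R).
  split; [exact: iXb | exact: (ndB p0 p1) |].
  rewrite (skewB p0 p1 ha0 ha1); nra.
pose q := eps / (2 * (1 + eps)).
have hq : q * (2 * (1 + eps)) = eps by rewrite /q mulfVK //; have := e1 _ ep; lra.
have q0 : 0 < q by rewrite /q divr_gt0 //; have := e1 _ ep; lra.
have q1 : q < 1 by nra.
have p0 : 0 < 1 - q by lra.
have p1 : 1 - q < 1 by lra.
exists _, _, (bernoulli_prob (1 - q)), (@Xb R).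
split; [exact: iXb | exact: (ndB p0 p1) |].
rewrite (skewB p0 p1 ha0 ha1); nra.
Qed.
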